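(* $\mathrm{SO}\text{-}\mathrm{EKROM}$ is closed under substructures: for every $\mathrm{SO}\text{-}\mathrm{EKROM}(\tau)$ sentence $\Phi$ and all finite $\tau$-structures $\mathcal{A},\mathcal{B}$ with $\mathcal{B}$ a substructure of $\mathcal{A}$, if $\mathcal{A}\models\Phi$ then $\mathcal{B}\models\Phi$.
   Context: For a vocabulary $\tau$ (containing equality), an SO-EKROM$(\tau)$ (second-order extended Krom) formula is a second-order formula of the form $\forall X_1\exists Y_1\cdots\forall X_k\exists Y_k\forall\bar{x}(C_1\wedge\cdots\wedge C_n)$, where $X_i,Y_i$ are relation variables and each clause $C_i$ is a disjunction $\alpha_1\vee\cdots\vee\alpha_l\vee H_1\vee H_2$ in which each $\alpha_s$ is $Q\bar{y}$ or $\neg Q\bar{y}$ with $Q\in\tau\cup\{X_1,\dots,X_k\}$, and each $H_t$ is $Y_i\bar{z}$ or $\neg Y_i\bar{z}$ for some $1\le i\le k$. *)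

(* Defs.v *)
From mathcomp Require Import all_boot.
Set Implicit Arguments. Unset Strict Implicit. Unset Printing Implicit Defensive.

(* A relational vocabulary: a finite set of relation symbols with arities.
   Equality is always available (built into the syntax below). *)
Record vocab := Vocab { vsym : finType; varity : vsym -> nat }.

Definition structure (tau : vocab) (T : finType) :=
  forall s : vsym tau, pred ((varity s).-tuple T).

(* B (universe U) is (an isomorphic copy of) a substructure of A (universe T):
   f : U -> T is injective and relations of B are exactly the restrictions
   of those of A. *)
Definition substructure (tau : vocab) (U T : finType)
  (B : structure tau U) (A : structure tau T) (f : U -> T) : Prop :=
  injective f /\ forall (s : vsym tau) (u : (varity s).-tuple U),
    B s u = A s [tuple of map f u].

Section Syntax.
Variables (tau : vocab) (k : nat) (ax ay : 'I_k -> nat) (m : nat).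
(* k : number of quantifier blocks forall X_i exists Y_i;
   ax i, ay i : arities of X_i, Y_i; m : number of first-order variables. *)

Inductive alpha_atom :=
| AEq (x y : 'I_m)
| ARel (s : vsym tau) (a : (varity s).-tuple 'I_m)
| AX (i : 'I_k) (a : (ax i).-tuple 'I_m).

Inductive y_atom := AY (i : 'I_k) (a : (ay i).-tuple 'I_m).

(* a literal is a sign (true = positive) with an atom *)
Record clause := Clause {
  c_alpha : seq (bool * alpha_atom);
  c_heads : seq (bool * y_atom) }.

(* forall X_1 exists Y_1 ... forall X_k exists Y_k forall x_1..x_m (C_1 /\ ... /\ C_n) *)
Record ekrom_formula := EKrom { ek_clauses : seq clause }.

Definition is_ekrom (Phi : ekrom_formula) : Prop :=
  all (fun C => size (c_heads C) <= 2) (ek_clauses Phi).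

End Syntax.

Section Semantics.
Variables (tau : vocab) (k : nat) (ax ay : 'I_k -> nat) (m : nat).
Variables (T : finType) (A : structure tau T).

(* second-order assignments: the relation variable with index i of arity n is
   interpreted by a predicate on sequences, only length-n sequences matter *)
Definition so_assign := nat -> pred (seq T).

Definition upd (S : so_assign) (i : nat) (R : pred (seq T)) : so_assign :=
  fun j => if j == i then R else S j.

Definition alpha_holds (Xs : so_assign) (v : 'I_m -> T)
  (a : @alpha_atom tau k ax m) : bool :=
  match a with
  | AEq x y => v x == v y
  | ARel s t => @A s [tuple of map v t]
  | AX i t => Xs i (map v t)
  end.

Definition y_holds (Ys : so_assign) (v : 'I_m -> T) (a : @y_atom k ay m) : bool :=
  match a with AY i t => Ys i (map v t) end.

Definition lit_holds {L : Type} (h : L -> bool) (l : bool * L) : bool :=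
  if l.1 then h l.2 else ~~ h l.2.

Definition clause_holds (Xs Ys : so_assign) (v : 'I_m -> T)
  (C : @clause tau k ax ay m) : bool :=
  has (lit_holds (alpha_holds Xs v)) (c_alpha C)
  || has (lit_holds (y_holds Ys v)) (c_heads C).

Definition matrix_holds (Phi : @ekrom_formula tau k ax ay m) (Xs Ys : so_assign) : Prop :=
  forall v : 'I_m -> T, all (clause_holds Xs Ys v) (ek_clauses Phi).

(* prefix: remaining r blocks, the next block has index k - r *)
Fixpoint prefix_holds (Phi : @ekrom_formula tau k ax ay m) (r : nat)
  (Xs Ys : so_assign) : Prop :=
  match r with
  | 0 => matrix_holds Phi Xs Ys
  | r'.+1 => forall X : pred (seq T), exists Y : pred (seq T),
      prefix_holds Phi r' (upd Xs (k - r) X) (upd Ys (k - r) Y)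
  end.

Definition models (Phi : @ekrom_formula tau k ax ay m) : Prop :=
  prefix_holds Phi k (fun _ => pred0) (fun _ => pred0).

End Semantics.

(* Main.v *)
Require Import Defs.
From mathcomp Require Import all_boot.

Section Aux.
Variables (tau : vocab) (k : nat) (ax ay : 'I_k -> nat) (m : nat)
  (Phi : @ekrom_formula tau k ax ay m) (T U : finType)
  (A : structure tau T) (B : structure tau U) (f : U -> T).
Hypothesis sub : substructure B A f.

Definition Inv (XA YA : so_assign T) (XB YB : so_assign U) : Prop :=
  forall i (t : seq U), XA i (map f t) = XB i t /\ YA i (map f t) = YB i t.

Definition g (x : T) : option U := [pick u | f u == x].

Lemma gf u : g (f u) = Some u.
Proof.
rewrite /g; case: pickP => [u' /eqP H|H].
  by move: sub => [inj _]; rewrite (inj _ _ H).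
by move: (H u); rewrite eqxx.
Qed.

Lemma pmap_gf t : pmap g (map f t) = t.
Proof. by elim: t => //= u t IH; rewrite gf /= IH. Qed.

Definition lift (X : pred (seq U)) : pred (seq T) :=
  fun s => (s == map f (pmap g s)) && X (pmap g s).

Lemma lift_map X t : lift X (map f t) = X t.
Proof. by rewrite /lift pmap_gf eqxx. Qed.

Lemma matrix_step XA YA XB YB : Inv XA YA XB YB ->
  matrix_holds A Phi XA YA -> matrix_holds B Phi XB YB.
Proof.
move=> Hinv HA v; move: (HA (f \o v)).
have E : forall C : clause tau ax ay m, clause_holds A XA YA (f \o v) C = clause_holds B XB YB v C.
  move=> C; rewrite /clause_holds; congr (_ || _).
    apply: eq_has => -[b a]; rewrite /lit_holds /=.
    have -> : alpha_holds A XA (f \o v) a = alpha_holds B XB v a; last by [].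
    case: a => [x y|s t|i t] /=.
    - by case: sub => Hinj _; apply/eqP/eqP => [/Hinj|->].
    - move: sub => [_ ->]; congr (A s _); apply: val_inj => /=.
      by rewrite map_comp.
    - by rewrite map_comp (Hinv i _).1.
  apply: eq_has => -[b [i t]]; rewrite /lit_holds /=.
  by rewrite map_comp (Hinv i _).2.
by rewrite (eq_all E).
Qed.

Lemma prefix_step r XA YA XB YB : Inv XA YA XB YB ->
  prefix_holds A Phi r XA YA -> prefix_holds B Phi r XB YB.
Proof.
elim: r XA YA XB YB => [|r IH] XA YA XB YB Hinv /=.
  exact: matrix_step.
move=> HA X; have [Y HY] := HA (lift X).
exists (fun t => Y (map f t)); apply: IH HY.
move=> i t; rewrite /upd; case: (i == k - r.+1); last exact: Hinv.
by rewrite lift_map.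
Qed.

End Aux.

Theorem proposition4p2 (tau : vocab) (k : nat) (ax ay : 'I_k -> nat) (m : nat)
  (Phi : @ekrom_formula tau k ax ay m) (T U : finType)
  (A : structure tau T) (B : structure tau U) (f : U -> T) :
  is_ekrom Phi -> substructure B A f -> models A Phi -> models B Phi.
Proof.
move=> _ sub HA; apply: (@prefix_step tau k ax ay m Phi T U A B f sub k _ _ _ _ _ HA) => i t; by split.
Qed.
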